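(* Fix integers $N\ge 1$, $M\ge 1$, $K\ge 1$, a wavelength $\lambda>0$, a reference path gain $\beta\in(0,1)$, and positive distances $d_{0,a_1}$, $d_{a_K,J+1}$ and $d_{a_k,a_{k+1}}$ ($k=1,\dots,K-1$). Consider a multi-hop reflection route from a base station (BS) with $N$ antennas through $K$ distinct intelligent reflecting surfaces (IRSs) $a_1,\dots,a_K$, each with $M$ reflecting elements, to a single-antenna user, with line-of-sight channels $$\mathbf H_{0,a_1}=\frac{\sqrt\beta}{d_{0,a_1}}e^{-\frac{j2\pi d_{0,a_1}}{\lambda}}\tilde{\mathbf h}_{a_1,2}\tilde{\mathbf h}_{a_1,1}^H\in\mathbb C^{M\times N},$$ $$\mathbf S_{a_k,a_{k+1}}=\frac{\sqrt\beta}{d_{a_k,a_{k+1}}}e^{-\frac{j2\pi d_{a_k,a_{k+1}}}{\lambda}}\tilde{\mathbf s}_{a_k,a_{k+1},2}\tilde{\mathbf s}_{a_k,a_{k+1},1}^H\in\mathbb C^{M\times M}\ (1\le k\le K-1),$$ $$\mathbf g_{a_K,J+1}^H=\frac{\sqrt\beta}{d_{a_K,J+1}}e^{-\frac{j2\pi d_{a_K,J+1}}{\lambda}}\tilde{\mathbf g}_{a_K,J+1}^H\in\mathbb C^{1\times M},$$ where $\tilde{\mathbf h}_{a_1,1}=\mathbf a_B(\vartheta_{0,a_1})$, and $\tilde{\mathbf h}_{a_1,2}$, $\tilde{\mathbf s}_{a_k,a_{k+1},1}$, $\tilde{\mathbf s}_{a_k,a_{k+1},2}$, $\tilde{\mathbf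 g}_{a_K,J+1}$ are IRS array responses $\mathbf a_I(\cdot,\cdot)$ at arbitrary angles (see context). For phase shifts $\theta_{a_k,m}\in\mathbb R$ let $\mathbf\Phi_{a_k}=\mathrm{diag}(e^{j\theta_{a_k,1}},\dots,e^{j\theta_{a_k,M}})$, and for a BS beamformer $\mathbf w_B\in\mathbb C^N$ with $\|\mathbf w_B\|=1$ define the end-to-end channel $$h_{0,J+1}=\mathbf g_{a_K,J+1}^H\mathbf\Phi_{a_K}\mathbf S_{a_{K-1},a_K}\mathbf\Phi_{a_{K-1}}\cdots\mathbf S_{a_1,a_2}\mathbf\Phi_{a_1}\mathbf H_{0,a_1}\mathbf w_B$$ (for $K=1$: $h_{0,J+1}=\mathbf g_{a_1,J+1}^H\mathbf\Phi_{a_1}\mathbf H_{0,a_1}\mathbf w_B$). Then the maximum of $|h_{0,J+1}|^2$ over all phase shifts $\{\theta_{a_k,m}\}$ and all unit-norm $\mathbf w_B$ equals $$M^{2K}N\kappa^2=\frac{M^{2K}N\beta^{K+1}}{d_{0,a_1}^2\,d_{a_K,J+1}^2\prod_{k=1}^{K-1}d_{a_k,a_{k+1}}^2},\qquad \kappa=\frac{(\sqrt\beta)^{K+1}}{d_{0,a_1}d_{a_K,J+1}\prod_{k=1}^{K-1}d_{a_k,a_{k+1}}},$$ and it is attained by $\mathbf w_B=e^{\frac{j2\pi D}{\lambda}}\tilde{\mathbf h}_{a_1,1}/\|\tilde{\mathbf h}_{a_1,1}\|$ with $D=d_{0,a_1}+d_{a_K,J+1}+\sum_{k=1}^{K-1}d_{a_k,a_{k+1}}$,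 and, for each $m\in\{1,\dots,M\}$, $\theta_{a_k,m}=\angle(\mathbf y_k)_m-\angle(\mathbf x_k)_m$, where the incoming vector is $\mathbf x_1=\tilde{\mathbf h}_{a_1,2}$ and $\mathbf x_k=\tilde{\mathbf s}_{a_{k-1},a_k,2}$ for $k\ge2$, and the outgoing vector is $\mathbf y_k=\tilde{\mathbf s}_{a_k,a_{k+1},1}$ for $k\le K-1$ and $\mathbf y_K=\tilde{\mathbf g}_{a_K,J+1}$.
   Context: $j$ denotes the imaginary unit; $\angle s$ is the phase of a complex number $s$ and $(\mathbf v)_m$ the $m$-th entry of a vector. The BS array response (uniform linear array with antenna spacing $d_A$) is $\mathbf a_B(\vartheta)\in\mathbb C^N$ with $(\mathbf a_B(\vartheta))_n=e^{-j2\pi(n-1)d_A\sin\vartheta/\lambda}$. Each IRS is a uniform rectangular array with $M=M_1M_2$ elements and element spacing $d_I$, with array response $\mathbf a_I(\vartheta^a,\vartheta^e)\in\mathbb C^M$, $(\mathbf a_I(\vartheta^a,\vartheta^e))_m=e^{-j2\pi d_I(\lfloor\frac{m-1}{M_1}\rfloor\sin\vartheta^e\cos\vartheta^a+(m-1-\lfloor\frac{m-1}{M_1}\rfloor M_1)\cos\vartheta^e)/\lambda}$, where $\vartheta^a,\vartheta^e$ are azimuth/elevation angles of arrival or departure. The vectors $\tilde{\mathbf h}_{a_1,2}$ (arrival at IRS $a_1$ from the BS), $\tilde{\mathbf s}_{a_k,a_{k+1},1}$ (departure from IRS $a_k$ toward IRS $a_{k+1}$), $\tilde{\mathbf s}_{a_k,a_{k+1},2}$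 (arrival at IRS $a_{k+1}$ from IRS $a_k$), and $\tilde{\mathbf g}_{a_K,J+1}$ (departure from IRS $a_K$ toward the user) are each of the form $\mathbf a_I(\vartheta^a,\vartheta^e)$ for some (arbitrary) angles. *)

(* Defs.v *)
From HB Require Import structures.
From mathcomp Require Import all_boot all_order all_algebra.
From mathcomp Require Import all_classical all_reals.
From mathcomp Require Import trigo.
From mathcomp Require Import complex.
Set Implicit Arguments. Unset Strict Implicit. Unset Printing Implicit Defensive.
Import Order.TTheory GRing.Theory Num.Theory.
Local Open Scope ring_scope.
Local Open Scope complex_scope.

Section Defs.
Variable R : realType.
Local Notation C := R[i].

Definition expi (t : R) : C := cos t +i* sin t.

Definition sqnorm (z : C) : R := complex.Re z ^+ 2 + complex.Im z ^+ 2.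

Definition vnorm n (v : 'cV[C]_n) : R := Num.sqrt (\sum_(i < n) sqnorm (v i 0)).

Definition carg (z : C) : R :=
  let r := Num.sqrt (sqnorm z) in
  if 0 <= complex.Im z then acos (complex.Re z / r) else - acos (complex.Re z / r).

Definition adjmx m n (A : 'M[C]_(m, n)) : 'M[C]_(n, m) :=
  \matrix_(i, j) conjc (A j i).

(* BS ULA response a_B(theta); index n is 0-based, i.e. n = (paper's n) - 1 *)
Definition aB N (dA lam th : R) : 'cV[C]_N :=
  \col_(n < N) expi (- (2 * pi * n%:R * dA * sin th / lam)).

(* IRS URA response a_I(az, el), M = M1*M2; index m is 0-based (= paper's m-1) *)
Definition aI M1 M2 (dI lam az el : R) : 'cV[C]_(M1 * M2) :=
  \col_(m < M1 * M2)
    expi (- (2 * pi * dI *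
       ((m %/ M1)%N%:R * sin el * cos az + (m %% M1)%N%:R * cos el) / lam)).

Definition losgain (beta lam d : R) : C :=
  (Num.sqrt beta / d)%:C * expi (- (2 * pi * d / lam)).

Definition Phimx M (th : 'I_M -> R) : 'M[C]_M := diag_mx (\row_m expi (th m)).

Definition natfun T n (f : 'I_n -> T) (d : T) (k : nat) : T :=
  if @insub _ (fun i => i < n)%N _ k is Some i then f i else d.

Fixpoint cascade M N (H0 : 'M[C]_(M, N)) (S : nat -> 'M[C]_M)
    (th : nat -> 'I_M -> R) (w : 'cV[C]_N) (k : nat) : 'cV[C]_M :=
  match k with
  | 0 => Phimx (th 0%N) *m (H0 *m w)
  | k'.+1 => Phimx (th k) *m (S k' *m cascade H0 S th w k')
  end.

(* The end-to-end channel h_{0,J+1} of the K-hop route.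
   IRS a_{k+1} <-> index k : 'I_K;  link a_{k+1} -> a_{k+2} <-> index k : 'I_K.-1. *)
Definition e2e N M1 M2 K (dA dI lam beta : R)
    (th0 : R)                                    (* AoD at BS toward a_1 *)
    (h2az h2el : R)                              (* AoA at a_1 from BS *)
    (s1az s1el s2az s2el : 'I_K.-1 -> R)         (* AoD/AoA of IRS-IRS links *)
    (gaz gel : R)                                (* AoD at a_K toward user *)
    (d0 dK : R) (dS : 'I_K.-1 -> R)
    (th : 'I_K -> 'I_(M1 * M2) -> R) (w : 'cV[C]_N) : C :=
  let H0 := losgain beta lam d0 *: (aI M1 M2 dI lam h2az h2el *m adjmx (aB N dA lam th0)) in
  let S := fun k : 'I_K.-1 =>
     losgain beta lam (dS k) *:
       (aI M1 M2 dI lam (s2az k) (s2el k) *m adjmx (aI M1 M2 dI lam (s1az k) (s1el k))) in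
  let grow := losgain beta lam dK *: adjmx (aI M1 M2 dI lam gaz gel) in
  (grow *m cascade H0 (natfun S 0) (natfun th (fun _ => 0)) w K.-1) 0 0.

Definition theta_opt M1 M2 K (dI lam h2az h2el : R)
    (s1az s1el s2az s2el : 'I_K.-1 -> R) (gaz gel : R)
    : 'I_K -> 'I_(M1 * M2) -> R :=
  fun k m =>
    let x := if (k : nat) == 0%N then aI M1 M2 dI lam h2az h2el
             else natfun (fun j : 'I_K.-1 => aI M1 M2 dI lam (s2az j) (s2el j)) 0 k.-1 in
    let y := if (k.+1 < K)%N
             then natfun (fun j : 'I_K.-1 => aI M1 M2 dI lam (s1az j) (s1el j)) 0 k
             else aI M1 M2 dI lam gaz gel in
    carg (y m 0) - carg (x m 0).

Definition w_opt N K (dA lam th0 d0 dK : R) (dS : 'I_K.-1 -> R) : 'cV[C]_N :=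
  let D := d0 + dK + \sum_(k < K.-1) dS k in
  (expi (2 * pi * D / lam) * ((vnorm (aB N dA lam th0))^-1)%:C) *: aB N dA lam th0.

End Defs.

(* Main.v *)
Require Import Defs.
From HB Require Import structures.
From mathcomp Require Import all_boot all_order all_algebra.
From mathcomp Require Import all_classical all_reals.
From mathcomp Require Import trigo.
From mathcomp Require Import complex.
From mathcomp Require Import ring lra.
Import Order.TTheory GRing.Theory Num.Theory.
Local Open Scope ring_scope.
Local Open Scope complex_scope.
Import Normc.

Section H.
Variable R : realType.
Local Notation C := R[i].

Lemma sqnorm_normc (z : C) : sqnorm z = normc z ^+ 2.
Proof. case: z => a b; rewrite /sqnorm /= sqr_sqrtr //; apply: addr_ge0; exact: sqr_ge0. Qed.

Lemma normc_ge0 (z : C) : 0 <= normc z.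
Proof. case: z => a b /=; exact: sqrtr_ge0. Qed.

Lemma normc_expi (t : R) : normc (expi t) = 1.
Proof. by rewrite /expi /= cos2Dsin2 sqrtr1. Qed.

Lemma normc_conj (z : C) : normc (conjc z) = normc z.
Proof. by case: z => a b /=; rewrite sqrrN. Qed.

Lemma normc_real (x : R) : normc (x%:C) = `|x|.
Proof. by rewrite /= expr0n /= addr0 sqrtr_sqr. Qed.

Lemma normc_sum I (r : seq I) (P : pred I) (F : I -> C) :
  normc (\sum_(i <- r | P i) F i) <= \sum_(i <- r | P i) normc (F i).
Proof.
elim/big_rec2: _ => [|i y z _ Hz]; first by rewrite normc0.
by apply: le_trans (le_normcD _ _) _; rewrite lerD2l.
Qed.

Lemma expiB (a b : R) : expi (a - b) = expi a * conjc (expi b).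
Proof. rewrite /expi /= cosB sinB; apply/eqP; rewrite eq_complex /=; apply/andP; split; apply/eqP; ring. Qed.

Lemma mulcJ (z : C) : z * conjc z = (normc z ^+ 2)%:C.
Proof. rewrite -sqnorm_normc; case: z => a b; rewrite /sqnorm /=; apply/eqP; rewrite eq_complex /=; apply/andP; split; apply/eqP; ring. Qed.

Lemma expi_carg (z : C) : normc z = 1 -> expi (carg z) = z.
Proof.
case: z => a b /= H.
have Hs : a ^+ 2 + b ^+ 2 = 1.
  by rewrite -[LHS]sqr_sqrtr ?H ?expr1n //; apply: addr_ge0; exact: sqr_ge0.
have Ha : -1 <= a <= 1.
  have : a ^+ 2 <= 1 by rewrite -Hs lerDl sqr_ge0.
  rewrite -real_normK ?num_real // => h; rewrite -ler_norml.
  have := normr_ge0 a; move: h; set n := `|a|; nra.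
rewrite /carg /sqnorm /= H divr1.
have Hsin : sin (acos a) = `|b|.
  by rewrite sin_acos // -Hs addrC addKr sqrtr_sqr.
case: ifP => Hb; rewrite /expi.
  rewrite acosK; last by rewrite in_itv /= Ha.
  by rewrite Hsin ger0_norm.
rewrite cosN sinN acosK; last by rewrite in_itv /= Ha.
rewrite Hsin ltr0_norm ?opprK //.
by rewrite ltNge Hb.
Qed.

Lemma sum_sqr_le n (x : 'I_n -> R) :
  (\sum_(i < n) x i) ^+ 2 <= n%:R * \sum_(i < n) x i ^+ 2.
Proof.
set S := \sum_(i < n) x i; set Q := \sum_(i < n) x i ^+ 2.
case: n x @S @Q => [|n] x S Q.
  by rewrite /S /Q !big_ord0 expr0n /= mul0r.
have H : 0 <= \sum_(i < n.+1) (x i * n.+1%:R - S) ^+ 2 by apply: sumr_ge0 => i _; exact: sqr_ge0.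
have E : \sum_(i < n.+1) (x i * n.+1%:R - S) ^+ 2 =
   n.+1%:R ^+ 2 * Q - 2 * n.+1%:R * S * S + n.+1%:R * S ^+ 2.
  rewrite (eq_bigr (fun i => n.+1%:R ^+ 2 * x i ^+ 2 + (- (2 * n.+1%:R * S) * x i + S ^+ 2))); last by move=> i _; ring.
  rewrite big_split big_split /= -!mulr_sumr sumr_const card_ord -/S -/Q mulr_natl; ring.
rewrite E in H.
have Hn : 0 < n.+1%:R :> R by rewrite ltr0n.
have : 0 <= n.+1%:R * (n.+1%:R * Q - S ^+ 2) by move: H; rewrite -!/(_ ^+ 2); nra.
rewrite pmulr_rge0 // subr_ge0 //.
Qed.

Lemma natfunE T n (f : 'I_n -> T) d (i : 'I_n) : natfun f d i = f i.
Proof. by rewrite /natfun valK. Qed.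

Lemma natfunN T n (f : 'I_n -> T) d k : (n <= k)%N -> natfun f d k = d.
Proof. by move=> h; rewrite /natfun insubN // -leqNgt. Qed.

Definition dot {n} (y x : 'cV[C]_n) : C := (adjmx y *m x) 0 0.

Lemma dotE n (y x : 'cV[C]_n) : dot y x = \sum_(i < n) conjc (y i 0) * x i 0.
Proof. by rewrite /dot !mxE; apply: eq_bigr => i _; rewrite !mxE. Qed.

Lemma rank1E m n (u : 'cV[C]_m) (v x : 'cV[C]_n) :
  (u *m adjmx v) *m x = dot v x *: u.
Proof.
apply/matrixP => i j; rewrite (ord1 j) !mxE dotE mulr_suml; apply: eq_bigr => l _.
rewrite !mxE big_ord1 !mxE. ring.
Qed.

Lemma PhiE n (th : 'I_n -> R) (x : 'cV[C]_n) :
  Phimx th *m x = \col_i (expi (th i) * x i 0).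
Proof. by apply/matrixP => i j; rewrite (ord1 j) /Phimx mul_diag_mx !mxE. Qed.


Lemma dotZ n (y x : 'cV[C]_n) c : dot y (c *: x) = c * dot y x.
Proof. by rewrite /dot -scalemxAr mxE. Qed.

Section Casc.
Variables (M N : nat) (g0 : C) (x0 : 'cV[C]_M) (b : 'cV[C]_N)
  (gs : nat -> C) (xs ys : nat -> 'cV[C]_M) (th : nat -> 'I_M -> R) (w : 'cV[C]_N).

Definition Xv (k : nat) : 'cV[C]_M := if k is k'.+1 then xs k' else x0.
Definition Dv (k : nat) : C := dot (ys k) (Phimx (th k) *m Xv k).
Fixpoint alpha (k : nat) : C :=
  if k is k'.+1 then gs k' * Dv k' * alpha k' else g0 * dot b w.

Lemma cascadeE (H0 : 'M[C]_(M, N)) (S : nat -> 'M[C]_M) :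
  H0 = g0 *: (x0 *m adjmx b) -> (forall k, S k = gs k *: (xs k *m adjmx (ys k))) ->
  forall k, cascade H0 S th w k = alpha k *: (Phimx (th k) *m Xv k).
Proof.
move=> -> HS; elim => [|k IH] /=.
  by rewrite -scalemxAl rank1E scalerA -scalemxAr.
rewrite IH HS -scalemxAl -scalemxAr rank1E dotZ -scalemxAr scalerA; congr (_ *: _).
by rewrite /Dv; ring.
Qed.

Lemma normc_alpha k : normc (alpha k) =
  normc g0 * normc (dot b w) * \prod_(j < k) (normc (gs j) * normc (Dv j)).
Proof.
elim: k => [|k IH] /=; first by rewrite big_ord0 mulr1 normcM.
by rewrite big_ord_recr /= !normcM IH; ring.
Qed.
End Casc.


Lemma sum_ones n : \sum_(i < n) (1 : R) = n%:R.
Proof. by rewrite sumr_const card_ord. Qed.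

Lemma dotPhi_le n (y x : 'cV[C]_n) th :
  (forall i, normc (y i 0) = 1) -> (forall i, normc (x i 0) = 1) ->
  normc (dot y (Phimx th *m x)) <= n%:R.
Proof.
move=> Hy Hx; rewrite dotE PhiE -sum_ones.
apply: le_trans; first exact: normc_sum.
apply: ler_sum => i _.
by rewrite !mxE !normcM normc_conj Hy Hx normc_expi !mul1r.
Qed.

Lemma dotPhi_opt n (y x : 'cV[C]_n) th :
  (forall i, normc (y i 0) = 1) -> (forall i, normc (x i 0) = 1) ->
  (forall i, th i = carg (y i 0) - carg (x i 0)) ->
  dot y (Phimx th *m x) = n%:R.
Proof.
move=> Hy Hx Ht; rewrite dotE PhiE.
transitivity (\sum_(i < n) (1 : C)); last by rewrite sumr_const card_ord.
apply: eq_bigr => i _.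
rewrite !mxE Ht expiB !expi_carg //.
have -> : conjc (y i 0) * (y i 0 * conjc (x i 0) * x i 0) =
   (y i 0 * conjc (y i 0)) * (x i 0 * conjc (x i 0)) by ring.
by rewrite !mulcJ Hy Hx expr1n mulr1.
Qed.

Lemma vnorm_unit n (b : 'cV[C]_n) : (forall i, normc (b i 0) = 1) -> vnorm b = Num.sqrt n%:R.
Proof.
move=> Hb; rewrite /vnorm -sum_ones; congr Num.sqrt; apply: eq_bigr => i _.
by rewrite sqnorm_normc Hb expr1n.
Qed.

Lemma dot_self n (b : 'cV[C]_n) : (forall i, normc (b i 0) = 1) -> dot b b = n%:R.
Proof.
move=> Hb; rewrite dotE.
transitivity (\sum_(i < n) (1 : C)); last by rewrite sumr_const card_ord.
apply: eq_bigr => i _.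
by rewrite mulrC mulcJ Hb expr1n.
Qed.

Lemma dot_CS n (b w : 'cV[C]_n) : (forall i, normc (b i 0) = 1) ->
  normc (dot b w) <= Num.sqrt n%:R * vnorm w.
Proof.
move=> Hb; rewrite dotE; apply: le_trans; first exact: normc_sum.
have E : \sum_(i < n) normc (conjc (b i 0) * w i 0) = \sum_(i < n) normc (w i 0).
  by apply: eq_bigr => i _; rewrite normcM normc_conj Hb mul1r.
rewrite E /vnorm -sqrtrM ?ler0n //.
have H0 : 0 <= \sum_(i < n) normc (w i 0) by apply: sumr_ge0 => i _; exact: normc_ge0.
rewrite -(ger0_norm H0) -sqrtr_sqr; apply: ler_wsqrtr.
have -> : \sum_(i < n) sqnorm (w i 0) = \sum_(i < n) normc (w i 0) ^+ 2.
  by apply: eq_bigr => i _; rewrite sqnorm_normc.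
exact: sum_sqr_le.
Qed.

Lemma natfunS T n (f : 'I_n -> T) d k (h : (k < n)%N) : natfun f d k = f (Ordinal h).
Proof. by rewrite /natfun insubT. Qed.

Lemma normc_losgain (beta lam d : R) : 0 < d -> 0 <= beta ->
  normc (losgain beta lam d) = Num.sqrt beta / d.
Proof.
move=> hd hb; rewrite /losgain normcM normc_expi mulr1 normc_real ger0_norm //.
by apply: divr_ge0; [exact: sqrtr_ge0 | exact: ltW].
Qed.

Lemma normc_aI M1 M2 (dI lam az el : R) i : normc (aI M1 M2 dI lam az el i 0) = 1.
Proof. by rewrite mxE normc_expi. Qed.

Lemma normc_aB N (dA lam th : R) i : normc (aB N dA lam th i 0) = 1.
Proof. by rewrite mxE normc_expi. Qed.

Lemma scal_dot n (c a : C) (y v : 'cV[C]_n) : ((c *: adjmx y) *m (a *: v)) 0 0 = c * (a * dot y v).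
Proof. by rewrite -scalemxAl mxE -scalemxAr mxE. Qed.

End H.
Arguments alpha {R M N}. Arguments dot {R n}. Arguments Xv {R M}. Arguments Dv {R M}.


Lemma e2eE (R : realType) (N M1 M2 K : nat) (dA dI lam beta : R)
    (th0 h2az h2el : R) (s1az s1el s2az s2el : 'I_K.-1 -> R) (gaz gel : R)
    (d0 dK : R) (dS : 'I_K.-1 -> R) th w :
  @e2e R N M1 M2 K dA dI lam beta th0 h2az h2el s1az s1el s2az s2el gaz gel d0 dK dS th w =
  losgain beta lam dK *
   (alpha (losgain beta lam d0) (aI M1 M2 dI lam h2az h2el) (aB N dA lam th0)
      (natfun (fun k => losgain beta lam (dS k)) 0)
      (natfun (fun k => aI M1 M2 dI lam (s2az k) (s2el k)) 0)
      (natfun (fun k => aI M1 M2 dI lam (s1az k) (s1el k)) 0)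
      (natfun th (fun _ => 0)) w K.-1 *
    dot (aI M1 M2 dI lam gaz gel)
      (Phimx (natfun th (fun _ => 0) K.-1) *m
        Xv (aI M1 M2 dI lam h2az h2el) (natfun (fun k => aI M1 M2 dI lam (s2az k) (s2el k)) 0) K.-1)).
Proof.
rewrite /e2e (@cascadeE R _ _ _ _ _ (natfun (fun k => losgain beta lam (dS k)) 0)
      (natfun (fun k => aI M1 M2 dI lam (s2az k) (s2el k)) 0)
      (natfun (fun k => aI M1 M2 dI lam (s1az k) (s1el k)) 0) _ _ _ _ erefl).
  by rewrite scal_dot.
move=> k; case: (ltnP k K.-1) => hk.
  by rewrite /natfun insubT.
by rewrite !natfunN // scale0r.
Qed.

Lemma vnormZ (R : realType) n (c : R[i]) (v : 'cV[R[i]]_n) : vnorm (c *: v) = normc c * vnorm v.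
Proof.
rewrite /vnorm -[normc c]ger0_norm ?normc_ge0 // -sqrtr_sqr -sqrtrM ?sqr_ge0 //; congr Num.sqrt.
rewrite mulr_sumr; apply: eq_bigr => i _; rewrite mxE !sqnorm_normc normcM; ring.
Qed.

Lemma XvU (R : realType) M1 M2 n (dI lam : R) (x0 : 'cV[R[i]]_(M1 * M2)) (az el : 'I_n -> R) j :
  (forall i, normc (x0 i 0) = 1) -> (j <= n)%N ->
  forall i, normc (Xv x0 (natfun (fun k => aI M1 M2 dI lam (az k) (el k)) 0) j i 0) = 1.
Proof.
move=> hx; case: j => [|j] hj i //=.
by rewrite (natfunS _ _ _ _ _ hj) normc_aI.
Qed.

Lemma thoptE (R : realType) M1 M2 K (dI lam h2az h2el : R)
    (s1az s1el s2az s2el : 'I_K.-1 -> R) (gaz gel : R) j (hj : (j < K)%N) :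
  natfun (@theta_opt R M1 M2 K dI lam h2az h2el s1az s1el s2az s2el gaz gel) (fun _ => 0) j =
  fun m => carg ((if (j.+1 < K)%N then natfun (fun k => aI M1 M2 dI lam (s1az k) (s1el k)) 0 j
                   else aI M1 M2 dI lam gaz gel) m 0)
         - carg (Xv (aI M1 M2 dI lam h2az h2el) (natfun (fun k => aI M1 M2 dI lam (s2az k) (s2el k)) 0) j m 0).
Proof.
rewrite (natfunS _ _ _ _ _ hj) /theta_opt /=; apply: funext => m.
by case: j hj.
Qed.

Local Close Scope complex_scope.

Theorem mainTheorem1 (R : realType) (N M1 M2 K : nat) (dA dI lam beta : R)
    (th0 h2az h2el : R) (s1az s1el s2az s2el : 'I_K.-1 -> R) (gaz gel : R)
    (d0 dK : R) (dS : 'I_K.-1 -> R) :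
  (1 <= N)%N -> (1 <= M1)%N -> (1 <= M2)%N -> (1 <= K)%N ->
  0 < dA -> 0 < dI -> 0 < lam -> 0 < beta < 1 ->
  0 < d0 -> 0 < dK -> (forall k, 0 < dS k) ->
  let M : R := (M1 * M2)%N%:R in
  let kappa : R := Num.sqrt beta ^+ K.+1 / (d0 * dK * \prod_(k < K.-1) dS k) in
  let V : R := M ^+ (2 * K) * N%:R * beta ^+ K.+1
               / (d0 ^+ 2 * dK ^+ 2 * \prod_(k < K.-1) dS k ^+ 2) in
  let h := @e2e R N M1 M2 K dA dI lam beta th0 h2az h2el s1az s1el s2az s2el gaz gel d0 dK dS in
  V = M ^+ (2 * K) * N%:R * kappa ^+ 2 /\
  (forall (th : 'I_K -> 'I_(M1 * M2) -> R) (w : 'cV[R[i]]_N),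
      vnorm w = 1 -> sqnorm (h th w) <= V) /\
  vnorm (@w_opt R N K dA lam th0 d0 dK dS) = 1 /\
  sqnorm (h (@theta_opt R M1 M2 K dI lam h2az h2el s1az s1el s2az s2el gaz gel)
            (@w_opt R N K dA lam th0 d0 dK dS)) = V.
Proof.
move=> hN hM1 hM2 hK hdA hdI hlam /andP[hb0 hb1] hd0 hdK hdS M kappa V h.
have eK : K = K.-1.+1 by rewrite prednK.
set k := K.-1 in eK kappa V h *.
set sb := Num.sqrt beta.
have hsb : 0 <= sb := sqrtr_ge0 _.
have hsb2 : sb ^+ 2 = beta by rewrite sqr_sqrtr // ltW.
have hM : 0 <= M by rewrite ler0n.
have hNr : 0 < N%:R :> R by rewrite ltr0n.
set sN := Num.sqrt (N%:R : R).
have hsN : 0 < sN by rewrite sqrtr_gt0.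
have hsN2 : sN ^+ 2 = N%:R by rewrite sqr_sqrtr // ltW.
set P := \prod_(j < k) dS j.
have hP : 0 < P by apply: prodr_gt0 => j _.
set B := (sb / dK) * (((sb / d0) * sN * \prod_(j < k) (sb / dS j * M)) * M).
have hq : forall d, 0 < d -> 0 <= sb / d by move=> d hd; apply: divr_ge0 => //; exact: ltW.
have hprod : 0 <= \prod_(j < k) (sb / dS j * M).
  by apply: prodr_ge0 => j _; apply: mulr_ge0 => //; exact: hq.
have hB : 0 <= B.
  rewrite /B; apply: mulr_ge0; first exact: hq.
  apply: mulr_ge0 => //; apply: mulr_ge0 => //; apply: mulr_ge0; [exact: hq | exact: ltW].
have EP : \prod_(j < k) (sb / dS j * M) = (sb * M) ^+ k / P.
  rewrite (eq_bigr (fun j => (sb * M) * (dS j)^-1)); last by move=> j _; rewrite mulrAC.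
  by rewrite big_split /= prodr_const card_ord prodfV.
have hd0' : d0 != 0 by rewrite gt_eqF.
have hdK' : dK != 0 by rewrite gt_eqF.
have hP' : P != 0 by rewrite gt_eqF.
have eV : V = M ^+ 2 * (M ^+ k) ^+ 2 * N%:R * (beta ^+ 2 * (sb ^+ k) ^+ 2) / (d0 ^+ 2 * dK ^+ 2 * P ^+ 2).
  rewrite /V eK mulnS exprD mulnC exprM [sb ^+ k ^+ 2]exprAC hsb2 prodrXl -/P.
  rewrite [beta ^+ k.+2]exprSr [beta ^+ k.+1]exprSr; ring.
have BV : B ^+ 2 = V.
  by rewrite /B EP eV [(sb * M) ^+ k]exprMn -hsb2 -hsN2; field; rewrite hP' hdK' hd0'.
split.
  rewrite /V /kappa prodrXl -/P expr_div_n [sb ^+ K.+1 ^+ 2]exprAC hsb2.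
  by field; rewrite hP' hdK' hd0'.
split.
  move=> th w hw; rewrite /h e2eE sqnorm_normc -BV.
  set X := normc _.
  have hX : X <= B.
    rewrite /X normcM normc_losgain ?(ltW hb0) // normcM /B.
    apply: ler_pM; [exact: hq | by apply: mulr_ge0; apply: normc_ge0 | by [] |].
    apply: ler_pM; [exact: normc_ge0 | exact: normc_ge0 | | ]; last first.
      by apply: dotPhi_le => i; [exact: normc_aI | apply: XvU => //; exact: normc_aI].
    rewrite normc_alpha.
    apply: ler_pM.
    - by apply: mulr_ge0; exact: normc_ge0.
    - by apply: prodr_ge0 => j _; apply: mulr_ge0; exact: normc_ge0.
    - apply: ler_pM; [exact: normc_ge0 | exact: normc_ge0 | by rewrite normc_losgain ?(ltW hb0) |].
      by have := @dot_CS R N _ w (@normc_aB R N dA lam th0); rewrite hw mulr1.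
    apply: ler_prod => j _; apply/andP; split; first by apply: mulr_ge0; exact: normc_ge0.
    rewrite natfunE normc_losgain ?(ltW hb0) //.
    apply: ler_pM; [exact: hq | exact: normc_ge0 | by [] |].
    rewrite /Dv natfunE; apply: dotPhi_le => i; first exact: normc_aI.
    by apply: XvU; [exact: normc_aI | exact: ltnW].
  rewrite !expr2; apply: ler_pM => //; exact: normc_ge0.
have hb : forall i, normc (aB N dA lam th0 i 0) = 1 := @normc_aB R N dA lam th0.
split.
  rewrite /w_opt vnormZ normcM normc_expi normc_real (@vnorm_unit R _ _ hb) -/sN mul1r.
  by rewrite ger0_norm ?invr_ge0 ?(ltW hsN) // mulVf // gt_eqF.
have normcN : forall n : nat, normc (n%:R : R[i]) = n%:R.
  by move=> n; rewrite normcMn normc1.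
rewrite /h e2eE sqnorm_normc -BV; congr (_ ^+ 2).
rewrite normcM normc_losgain ?(ltW hb0) // normcM normc_alpha /B.
congr (_ * (_ * _ * _ * _)).
- by rewrite normc_losgain ?(ltW hb0).
- rewrite /w_opt dotZ (@dot_self R _ _ hb) !normcM normc_expi normc_real (@vnorm_unit R _ _ hb) -/sN normcN.
  rewrite mul1r ger0_norm ?invr_ge0 ?(ltW hsN) // -hsN2; field; rewrite gt_eqF //=.
- apply: eq_bigr => j _; rewrite natfunE normc_losgain ?(ltW hb0) //; congr (_ * _).
  have hj1 : (j.+1 < K)%N by rewrite -ltn_predRL.
  have hj : (j < K)%N by exact: ltnW.
  rewrite /Dv (@thoptE R M1 M2 K dI lam h2az h2el s1az s1el s2az s2el gaz gel _ hj) ifT //.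
  rewrite dotPhi_opt ?normcN // => i; first by rewrite natfunE normc_aI.
  by apply: XvU; [exact: normc_aI | exact: ltnW].
have hj : (k < K)%N by rewrite /k prednK.
rewrite (@thoptE R M1 M2 K dI lam h2az h2el s1az s1el s2az s2el gaz gel _ hj) ifF; last by rewrite /k prednK // ltnn.
rewrite dotPhi_opt ?normcN // => i; first exact: normc_aI.
by apply: XvU; [exact: normc_aI | exact: leqnn].
Qed.
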